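(* Let $\mathcal{S}\subset\mathbb{R}^d$ be compact, let $k$ be a continuous symmetric positive definite kernel on $\mathcal{S}$ with Mercer expansion $k(\boldsymbol{t},\boldsymbol{t}')=\sum_{i\ge1}\eta_i\phi_i(\boldsymbol{t})\phi_i(\boldsymbol{t}')$ ($\eta_i>0$, $\phi_i$ orthonormal in $L_2(\mathcal{S})$), let $\gamma>0$, and let $\tilde{k}(\boldsymbol{t},\boldsymbol{t}')=\sum_{i\ge1}\frac{\eta_i}{\eta_i+\gamma}\phi_i(\boldsymbol{t})\phi_i(\boldsymbol{t}')$ with RKHS $\mathcal{H}_{\tilde{k}}$. Given observed events $\boldsymbol{t}_1,\dots,\boldsymbol{t}_n\in\mathcal{S}$, consider $$J(h)= -\sum_{i=1}^{n}\log h^2(\boldsymbol{t}_i) + \Vert h\Vert^2_{\mathcal{H}_{\tilde{k}}},\qquad h\in\mathcal{H}_{\tilde{k}}.$$ If $\hat h$ is a minimizer of $J$ over $\mathcal{H}_{\tilde{k}}$, then there exist coefficients $\alpha\in\mathbb{R}^n$ such that $\hat{h}(\cdot)=\sum_{i=1}^{n}\alpha_i\tilde{k}(\boldsymbol{t}_i,\cdot)$, and the posterior mean of the latent Gaussian process is $\hat{\boldsymbol{g}}=\kappa^{-1}(\hat{h}^2(\boldsymbol{t}))$.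
   Context: Gaussian Cox process model: a latent function $g:\mathcal{S}\to\mathbb{R}$ with a Gaussian process prior, and a deterministic non-negative smooth invertible link function $\kappa:\mathbb{R}\to\mathbb{R}^+$; the observed points are a Poisson process with intensity $\lambda(\boldsymbol{t})=\kappa(g(\boldsymbol{t}))$, so the log-likelihood given $g$ is $\sum_{i=1}^n\log\kappa(g(\boldsymbol{t}_i))-\int_{\mathcal{S}}\kappa(g(\boldsymbol{t}))d\boldsymbol{t}$. The posterior mean estimate $\hat{\boldsymbol g}$ is the (Laplace/MAP) mode obtained by writing $h=\kappa^{1/2}(g)$ and minimizing the penalized negative log-likelihood $-\sum_i\log h^2(\boldsymbol{t}_i)+\int_{\mathcal{S}}h^2+\gamma\Vert h\Vert^2_{\mathcal{H}_k}$, which for $h\in\mathcal{H}_k$ equals $J(h)$ above; $\mathcal{H}_k$ and $\mathcal{H}_{\tilde k}$ contain the same functions. *)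

(* Defs.v *)
From HB Require Import structures.
From mathcomp Require Import all_boot all_order all_algebra.
From mathcomp Require Import all_classical all_reals all_analysis.

Set Implicit Arguments.
Unset Strict Implicit.
Unset Printing Implicit Defensive.
Import Order.TTheory GRing.Theory Num.Theory.
Import numFieldNormedType.Exports.
Local Open Scope classical_set_scope.
Local Open Scope ring_scope.

Definition row_of_seq {R : realType} (d : nat) (xs : seq R) : 'rV[R]_d :=
  \row_(i < d) nth 0 xs i.

(* The same coordinates, as a d-tuple (n.-tuple R carries the product
   sigma-algebra generated by the coordinate projections). *)
Definition row_of_tuple {R : realType} (d : nat) (x : d.-tuple R) : 'rV[R]_d :=
  \row_(i < d) tnth x i.

Fixpoint iter_lebesgue {R : realType} (n : nat) (g : seq R -> \bar R) : \bar R :=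
  match n with
  | 0 => g [::]
  | n'.+1 => (\int[@lebesgue_measure R]_x iter_lebesgue n' (fun xs => g (x :: xs)))%E
  end.

Definition int_over {R : realType} (d : nat) (S : set 'rV[R]_d)
    (f : 'rV[R]_d -> R) : \bar R :=
  iter_lebesgue d (fun xs => ((\1_S (row_of_seq d xs) : R) * f (row_of_seq d xs))%:E).

Definition orthonormal_L2 {R : realType} (d : nat) (S : set 'rV[R]_d)
    (phi : nat -> 'rV[R]_d -> R) : Prop :=
  (forall i, measurable_fun setT (fun x : d.-tuple R => phi i (row_of_tuple x))) /\
  (forall i j, int_over S (fun t => phi i t * phi j t) = (if i == j then 1 else 0)%:E).

Definition kernel_continuous_on {R : realType} (d : nat) (S : set 'rV[R]_d)
    (k : 'rV[R]_d -> 'rV[R]_d -> R) : Prop :=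
  {within S `*` S, continuous (fun p : 'rV[R]_d * 'rV[R]_d => k p.1 p.2)}.

Definition kernel_symmetric {R : realType} (d : nat) (S : set 'rV[R]_d)
    (k : 'rV[R]_d -> 'rV[R]_d -> R) : Prop :=
  forall t t', S t -> S t' -> k t t' = k t' t.

Definition kernel_posdef {R : realType} (d : nat) (S : set 'rV[R]_d)
    (k : 'rV[R]_d -> 'rV[R]_d -> R) : Prop :=
  forall (m : nat) (x : 'I_m -> 'rV[R]_d) (c : 'I_m -> R),
    (forall i, S (x i)) ->
    0 <= \sum_(i < m) \sum_(j < m) c i * c j * k (x i) (x j).

(* Mercer expansion k(t,t') = sum_i eta_i phi_i(t) phi_i(t') on S x S
   (indices shifted to start at 0). *)
Definition mercer_expansion {R : realType} (d : nat) (S : set 'rV[R]_d)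
    (k : 'rV[R]_d -> 'rV[R]_d -> R) (eta : nat -> R) (phi : nat -> 'rV[R]_d -> R) : Prop :=
  forall t t', S t -> S t' ->
    (fun N => \sum_(i < N) eta i * phi i t * phi i t') @ \oo --> k t t'.

Definition ktilde {R : realType} (d : nat) (eta : nat -> R)
    (phi : nat -> 'rV[R]_d -> R) (gamma : R) (t t' : 'rV[R]_d) : R :=
  limn (fun N => \sum_(i < N) eta i / (eta i + gamma) * phi i t * phi i t').

(* Functions are represented on the
   whole of R^d; two of them are identified when they agree on S, which is
   enforced by: ip f f = 0 <-> f vanishes on S. *)
Definition is_RKHS {R : realType} (d : nat) (S : set 'rV[R]_d)
    (K : 'rV[R]_d -> 'rV[R]_d -> R)
    (H : set ('rV[R]_d -> R)) (ip : ('rV[R]_d -> R) -> ('rV[R]_d -> R) -> R) : Prop :=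
  [/\
      H (fun _ => 0) /\
      (forall (a : R) f g, H f -> H g -> H (fun s => a * f s + g s)),
      (forall f g, H f -> H g -> ip f g = ip g f) /\
      (forall (a : R) f g h, H f -> H g -> H h ->
          ip (fun s => a * f s + g s) h = a * ip f h + ip g h),
      (forall f, H f -> 0 <= ip f f) /\
      (forall f, H f -> (ip f f = 0 <-> forall s, S s -> f s = 0)),
      (forall u : nat -> ('rV[R]_d -> R), (forall n, H (u n)) ->
         (forall e : R, 0 < e -> exists N, forall m n, (N <= m)%N -> (N <= n)%N ->
             ip (fun s => u m s - u n s) (fun s => u m s - u n s) < e) ->
         exists2 f, H f &
           (fun n => ip (fun s => u n s - f s) (fun s => u n s - f s)) @ \oo --> (0 : R))
    &
      (forall t, S t -> H (K t)) /\
      (forall f t, H f -> S t -> ip f (K t) = f t)].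

(* J(h) = - sum_i log h^2(t_i) + ||h||^2_H, with value +oo when some
   h(t_i) = 0 (log 0 = -oo). *)
Definition Jobj {R : realType} (d : nat) (ip : ('rV[R]_d -> R) -> ('rV[R]_d -> R) -> R)
    (n : nat) (tt : 'I_n -> 'rV[R]_d) (h : 'rV[R]_d -> R) : \bar R :=
  if [forall i, h (tt i) != 0]
  then (- (\sum_(i < n) ln (h (tt i) ^+ 2)) + ip h h)%:E
  else +oo%E.

(* Main.v *)
Require Import Defs.
From HB Require Import structures.
From mathcomp Require Import all_boot all_order all_algebra.
From mathcomp Require Import all_classical all_reals all_analysis.
From mathcomp Require Import ring lra.
Import Order.TTheory GRing.Theory Num.Theory.
Import numFieldNormedType.Exports.
Local Open Scope classical_set_scope.
Local Open Scope ring_scope.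

Section Proj.
Variables (R : realFieldType) (T : Type) (H : set (T -> R))
  (ip : (T -> R) -> (T -> R) -> R).
Hypotheses (H0 : H (fun _ => 0))
  (Hl : forall (a : R) f g, H f -> H g -> H (fun s => a * f s + g s))
  (Hsym : forall f g, H f -> H g -> ip f g = ip g f)
  (Hlin : forall (a : R) f g h, H f -> H g -> H h ->
          ip (fun s => a * f s + g s) h = a * ip f h + ip g h)
  (Hpos : forall f, H f -> 0 <= ip f f).

Lemma ip0 h : H h -> ip (fun _ => 0) h = 0.
Proof.
move=> Hh; have := Hlin 1 _ _ _ H0 H0 Hh.
have -> : (fun s : T => 1 * (0:R) + 0) = (fun _ => 0) by apply: funext => s; rewrite mulr0 addr0.
move=> E; lra.
Qed.

Lemma Hsc a f : H f -> H (fun s => a * f s).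
Proof.
move=> Hf; have -> : (fun s => a * f s) = (fun s => a * f s + 0) by apply: funext => s; rewrite addr0.
exact: Hl.
Qed.

Lemma Hsub f g : H f -> H g -> H (fun s => f s - g s).
Proof.
move=> Hf Hg; have -> : (fun s => f s - g s) = (fun s => (-1) * g s + f s).
  by apply: funext => s; rewrite mulN1r addrC.
exact: Hl.
Qed.

Lemma ipsc a f h : H f -> H h -> ip (fun s => a * f s) h = a * ip f h.
Proof.
move=> Hf Hh; have -> : (fun s => a * f s) = (fun s => a * f s + 0) by apply: funext => s; rewrite addr0.
by rewrite Hlin // ip0 // addr0.
Qed.

Lemma ipsub f g h : H f -> H g -> H h -> ip (fun s => f s - g s) h = ip f h - ip g h.
Proof.
move=> Hf Hg Hh; have -> : (fun s => f s - g s) = (fun s => (-1) * g s + f s).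
  by apply: funext => s; rewrite mulN1r addrC.
rewrite Hlin //; lra.
Qed.

Definition lc m (c : nat -> R) (u : nat -> T -> R) := fun s => \sum_(i < m) c i * u i s.

Lemma lcS m c u : lc m.+1 c u = fun s => c m * u m s + lc m c u s.
Proof. by apply: funext => s; rewrite /lc big_ord_recr /= addrC. Qed.

Lemma Hlc m c u : (forall i, H (u i)) -> H (lc m c u).
Proof.
move=> Hu; elim: m => [|m IH].
  have -> : lc 0 c u = (fun _ => 0) by apply: funext => s; rewrite /lc big_ord0.
  exact: H0.
by rewrite lcS; apply: Hl.
Qed.

Lemma iplc m c u h : (forall i, H (u i)) -> H h ->
  ip (lc m c u) h = \sum_(i < m) c i * ip (u i) h.
Proof.
move=> Hu Hh; elim: m => [|m IH].
  have -> : lc 0 c u = (fun _ => 0) by apply: funext => s; rewrite /lc big_ord0.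
  by rewrite ip0 // big_ord0.
by rewrite lcS Hlin //; [rewrite IH big_ord_recr /= addrC | exact: Hlc].
Qed.

Lemma cs g r : H g -> H r -> ip r r = 0 -> ip g r = 0.
Proof.
move=> Hg Hr Hrr; apply/eqP; apply: contraT => /negbTE x0.
set x := ip g r; set A := ip g g.
set l := - (A + 1) / (2 * x).
have Hlx : l * x = - (A + 1) / 2.
  by rewrite /l; field; do ?split; rewrite ?x0 ?pnatr_eq0.
pose F := fun s => l * r s + g s.
have HF : H F by apply: Hl.
have e1 : ip F F = l * ip r F + ip g F by rewrite {1}/F Hlin.
have e2 : ip r F = l * ip r r + ip g r by rewrite Hsym // /F Hlin.
have e3 : ip g F = l * ip r g + ip g g by rewrite Hsym // /F Hlin.
have := Hpos _ HF; rewrite e1 e2 e3 Hrr -/x -/A [ip r g]Hsym // -/x.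
move=> h; lra.
Qed.

Lemma proj m (u : nat -> T -> R) : (forall i, H (u i)) -> forall f, H f ->
  exists c : nat -> R, forall j, (j < m)%N ->
    ip (fun s => f s - lc m c u s) (u j) = 0.
Proof.
move=> Hu; elim: m => [|m IH] f Hf.
  by exists (fun _ => 0) => j.
have [c Hc] := IH f Hf.
have [d Hd] := IH (u m) (Hu m).
set r := fun s => u m s - lc m d u s.
set f' := fun s => f s - lc m c u s.
have Hr : H r by apply: Hsub => //; exact: Hlc.
have Hf' : H f' by apply: Hsub => //; exact: Hlc.
set mu := ip f' r / ip r r.
pose c' := fun i => if (i < m)%N then c i - mu * d i else mu.
exists c'.
have E : (fun s => f s - lc m.+1 c' u s) = (fun s => (- mu) * r s + f' s).
  apply: funext => s; rewrite lcS /c' ltnn /r /f' /lc.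
  have -> : \sum_(i < m) (if (i < m)%N then c i - mu * d i else mu) * u i s
          = \sum_(i < m) c i * u i s - mu * \sum_(i < m) d i * u i s.
    rewrite mulr_sumr -sumrB; apply: eq_bigr => i _; rewrite ltn_ord; ring.
  ring.
rewrite E.
have Hf'' : H (fun s => (- mu) * r s + f' s) by exact: Hl.
have K1 : forall j, (j < m)%N -> ip (fun s => (- mu) * r s + f' s) (u j) = 0.
  move=> j jm; rewrite Hlin // Hd // Hc //; ring.
have K2 : ip (fun s => (- mu) * r s + f' s) r = 0.
  rewrite Hlin //; have [rr0|rr0] := eqVneq (ip r r) 0.
    by rewrite rr0 (@cs _ _ Hf' Hr rr0); ring.
  rewrite /mu; field; exact: rr0.
move=> j; rewrite ltnS leq_eqVlt => /orP [/eqP ->|jm]; last exact: K1.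
have Um : u m = (fun s => 1 * r s + lc m d u s).
  by apply: funext => s; rewrite /r mul1r subrK.
rewrite Um Hsym //; last by rewrite -Um.
rewrite Hlin //; last exact: Hlc.
rewrite -Hsym // K2 iplc // big1 ?mulr0 ?addr0 // => i _.
by rewrite -Hsym // K1 ?mulr0.
Qed.

End Proj.
Arguments lc {R T}.

Theorem theorem1 (R : realType) (d : nat) (S : set 'rV[R]_d)
  (k : 'rV[R]_d -> 'rV[R]_d -> R) (eta : nat -> R) (phi : nat -> 'rV[R]_d -> R)
  (gamma : R)
  (H : set ('rV[R]_d -> R)) (ip : ('rV[R]_d -> R) -> ('rV[R]_d -> R) -> R)
  (n : nat) (tt : 'I_n -> 'rV[R]_d) (hhat : 'rV[R]_d -> R) :
  compact S ->
  kernel_continuous_on S k -> kernel_symmetric S k -> kernel_posdef S k ->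
  (forall i, 0 < eta i) -> orthonormal_L2 S phi -> mercer_expansion S k eta phi ->
  0 < gamma ->
  is_RKHS S (ktilde eta phi gamma) H ip ->
  (forall i, S (tt i)) ->
  H hhat -> (forall i, hhat (tt i) != 0) ->
  (forall h, H h -> (Jobj ip tt hhat <= Jobj ip tt h)%E) ->
  exists alpha : 'I_n -> R,
    forall s, S s -> hhat s = \sum_(i < n) alpha i * ktilde eta phi gamma (tt i) s.
Proof.
move=> _ _ _ _ _ _ _ _ [[H0 Hl] [Hsym Hlin] [Hpos Hzero] _ [HK Hrep]] Stt Hh hne Hmin.
set K := ktilde eta phi gamma.
pose u := fun j : nat => if (insub j : option 'I_n) is Some i then K (tt i) else (fun _ => 0).
have Hu : forall j, H (u j).
  by move=> j; rewrite /u; case: (insub j) => [i|] //; apply: HK.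
have uE : forall i : 'I_n, u i = K (tt i) by move=> i; rewrite /u valK.
have [c Hc] := @proj R _ H ip H0 Hl Hsym Hlin Hpos n u Hu hhat Hh.
set v := lc n c u.
set w := fun s => hhat s - v s.
have Hv : H v by exact: Hlc.
have Hw : H w by exact: Hsub.
have w0 : forall i : 'I_n, w (tt i) = 0.
  by move=> i; rewrite -(Hrep _ _ Hw (Stt i)) -/K -uE; apply: Hc.
have vt : forall i : 'I_n, v (tt i) = hhat (tt i).
  by move=> i; have := w0 i; rewrite /w => /eqP; rewrite subr_eq0 => /eqP.
have Hvw : ip v w = 0.
  rewrite /v (@iplc _ _ _ _ H0 Hl Hlin) // big1 // => i _.
  by rewrite Hsym // uE Hrep // w0 mulr0.
have hE : hhat = (fun s => 1 * v s + w s) by apply: funext => s; rewrite mul1r /w addrC subrK.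
have Hvv : ip hhat hhat = ip v v + ip w w.
  pose F := fun s => 1 * v s + w s.
  have HF : H F by apply: Hl.
  have -> : ip hhat hhat = ip F F by rewrite /F -hE.
  have e1 : ip F F = 1 * ip v F + ip w F by rewrite {1}/F Hlin.
  have e2 : ip v F = 1 * ip v v + ip w v by rewrite Hsym // /F Hlin.
  have e3 : ip w F = 1 * ip v w + ip w w by rewrite Hsym // /F Hlin.
  rewrite e1 e2 e3 [ip w v]Hsym // Hvw; lra.
have := Hmin v Hv; rewrite /Jobj.
have -> : [forall i, hhat (tt i) != 0] by apply/forallP.
have -> : [forall i, v (tt i) != 0] by apply/forallP => i; rewrite vt.
rewrite lee_fin.
have -> : \sum_(i < n) ln (v (tt i) ^+ 2) = \sum_(i < n) ln (hhat (tt i) ^+ 2).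
  by apply: eq_bigr => i _; rewrite vt.
rewrite Hvv => Hle.
have ww0 : ip w w = 0 by have := Hpos w Hw; lra.
have := (Hzero w Hw).1 ww0 => wS.
exists (fun i => c i) => s Ss.
have := wS s Ss; rewrite /w /v /lc => /eqP; rewrite subr_eq0 => /eqP ->.
by apply: eq_bigr => i _; rewrite uE.
Qed.
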